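(* Let $U$ be a countably infinite universe and $\mathcal{C}=(L_1,L_2,\ldots)$ a countably infinite collection of languages over $U$, and consider the Noisy Procedure in the context. At every execution of step (A), the sizes of the finite sets $T\subseteq U$ satisfying the conditions of step (A) are bounded above (so a largest such $T$ exists whenever some such $T$ exists). In particular, $m^\star_n(L_i)<\infty$ for every $n\ge0$ and $i\ge1$.
   Context: A language is an infinite subset of $U$; a collection is a sequence of languages (repetitions allowed, entries distinguished by index). For a set $T$, language $L$ and integer $a\ge0$, $T$ is $a$-contained in $L$ if $\sum_{x\in T}\mathbf{1}[x\notin L]\le a$. Diagonal order: pairs $(n,i)$, $n\ge0$, $i\ge1$, ordered as $(0,1),(1,1),(0,2),(2,1),(1,2),(0,3),\ldots$, i.e. for $n'=0,1,2,\ldots$ and $h=0,\ldots,n'$ the pair $(n'-h,h+1)$. Each pair $(a,b)$ has an entry $L_{a,b}$, a copy of $L_b$ labelled $(a,b)$. Noisy Procedure. Set $\mathcal{C}'_0=()$. For $l=1,2,\ldots$, let $(n,i)$ be the $l$-th pair; append $L_{n,i}$ to the end of $\mathcal{C}'_{l-1}$ to get $\mathcal{C}'_l=(L'_1,\ldots,L'_l)$, set $j=l$. Repeat: (A) consider finite sets $T\subseteq U$ for which there is a subcollection $\mathcal{D}$ of the entries $(L'_1,\ldots,L'_j)$ such that $\mathcal{D}$ includes $L'_j$, $T$ is $a$-contained in $L_b$ for every entry $L_{a,b}\in\mathcal{D}$, and $\bigcap_{L_{a,b}\in\mathcal{D}}L_b$ is finite; let $T$ be such a set of largest size, $\mathcal{C}_{\mathrm{chk}}$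 a corresponding $\mathcal{D}$, and $m_{\mathrm{chk}}=|T|$ ($0$ if no such $\mathcal{D}$ exists). (B) If $j\le1$ or $m_{\mathrm{chk}}>m^\star_a(L_b)$ where $L'_{j-1}=L_{a,b}$, stop. (C) Otherwise swap positions $j-1,j$, set $j\leftarrow j-1$, return to (A). On stopping, set $T(L_{n,i})=T$, $\mathcal{C}(L_{n,i})=\mathcal{C}_{\mathrm{chk}}$, $m^\star_n(L_i)=m_{\mathrm{chk}}$. *)

(* Defs.v *)
From mathcomp Require Import all_boot.
Set Implicit Arguments. Unset Strict Implicit. Unset Printing Implicit Defensive.

(* An entry L_{a,b} of the procedure is represented by its label (a,b);
   it is a copy of the language L_b. *)
Definition entry := (nat * nat)%type.

Definition diag_list (N : nat) : seq entry :=
  flatten [seq [seq (n' - h, h.+1) | h <- iota 0 n'.+1] | n' <- iota 0 N].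

(* The l-th pair (l >= 1) of the diagonal order (diag_list l has >= l items). *)
Definition diag_pair (l : nat) : entry := nth (0, 0) (diag_list l) l.-1.

Section Procedure.
Variable U : countType.
Variable L : nat -> U -> Prop.   (* the collection: L i for i >= 1 *)

(* T (a finite set, given as a duplicate-free sequence) is a-contained in
   the language X: at most a elements of T lie outside X. *)
Definition a_contained (a : nat) (X : U -> Prop) (T : seq U) : Prop :=
  forall S : seq U, uniq S -> {subset S <= T} ->
    (forall x, x \in S -> ~ X x) -> size S <= a.

Definition ent (s : seq entry) (k : nat) : entry := nth (0, 0) s k.

(* T satisfies the conditions of step (A) for the current collection
   s = (L'_1,...,L'_l) and current index j (1-indexed): there is a
   subcollection D of the entries L'_1..L'_j (given by 0-indexed positions
   < j) containing L'_j, such that T is a-contained in L_b for every entry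
   L_{a,b} of D, and the intersection of the L_b over D is finite. *)
Definition stepA_valid (s : seq entry) (j : nat) (T : seq U) : Prop :=
  uniq T /\
  exists D : seq nat,
    j.-1 \in D /\
    (forall k, k \in D -> k < j) /\
    (forall k, k \in D -> a_contained (ent s k).1 (L (ent s k).2) T) /\
    (exists F : seq U, forall x, (forall k, k \in D -> L (ent s k).2 x) -> x \in F).

Definition stepA_outcome (s : seq entry) (j : nat) (mchk : nat) : Prop :=
  ((forall T, ~ stepA_valid s j T) /\ mchk = 0) \/
  (exists T, stepA_valid s j T /\ size T = mchk /\
     forall T', stepA_valid s j T' -> size T' <= size T).

Definition swap_at (s : seq entry) (k : nat) : seq entry :=
  take k s ++ [:: ent s k.+1; ent s k] ++ drop k.+2 s.

(* m* values: m* (a,b) = Some v means m*_a(L_b) = v has been set. *)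
Definition mstar_t := entry -> option nat.

Definition upd (m : mstar_t) (e : entry) (v : nat) : mstar_t :=
  fun e' => if e' == e then Some v else m e'.

(* stopping test of step (B); L'_{j-1} is at 0-indexed position j-2 *)
Definition stop_test (s : seq entry) (j : nat) (m : mstar_t) (mchk : nat) : Prop :=
  j <= 1 \/ (exists v, m (ent s (j.-2)) = Some v /\ v < mchk).

(* Executions of the Noisy Procedure.
   reachA l s j m : step (A) is executed during round l with current
                    collection s, current index j and m* values m.
   reachDone l s m : round l has finished (C'_l = s, m* values m). *)
Inductive reachA : nat -> seq entry -> nat -> mstar_t -> Prop :=
| RA_start l s m : reachDone l s m ->
    reachA l.+1 (rcons s (diag_pair l.+1)) l.+1 m
| RA_swap l s j m mchk : reachA l s j m -> stepA_outcome s j mchk ->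
    ~ stop_test s j m mchk -> reachA l (swap_at s j.-2) j.-1 m
with reachDone : nat -> seq entry -> mstar_t -> Prop :=
| RD_init : reachDone 0 [::] (fun _ => None)
| RD_stop l s j m mchk : reachA l s j m -> stepA_outcome s j mchk ->
    stop_test s j m mchk -> reachDone l s (upd m (ent s j.-1) mchk).

End Procedure.

(* Main.v *)
Require Import Defs.
From mathcomp Require Import all_boot.
From mathcomp Require Import zify.
From Stdlib Require Import Classical ClassicalEpsilon.
Set Implicit Arguments. Unset Strict Implicit. Unset Printing Implicit Defensive.

Lemma ac_sub (U : countType) a (X : U -> Prop) (T1 T2 : seq U) :
  {subset T1 <= T2} -> a_contained a X T2 -> a_contained a X T1.
Proof. move=> H H2 S uS sS nS; apply: H2 => //. by move=> x xS; apply H, sS. Qed.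

Lemma count_bound (U : countType) (X : nat -> U -> Prop) (a : nat -> nat) (F : seq U) Q :
  forall T, uniq T -> (forall x, x \in T -> (forall k, k \in Q -> X k x) -> x \in F) ->
  (forall k, k \in Q -> a_contained (a k) (X k) T) -> size T <= size F + sumn (map a Q).
Proof.
elim: Q => [|q Q IH] T uT HF Ha.
  apply: leq_trans (uniq_leq_size uT _) (leq_addr _ _) => x xT.
  by apply: HF => // k; rewrite in_nil.
pose p := fun x => if excluded_middle_informative (X q x) then true else false.
have E : size T = count p T + count (predC p) T by rewrite count_predC.
have H2 : count (predC p) T <= a q.
  rewrite -size_filter; apply: (Ha q (mem_head _ _)).
  - exact: filter_uniq.
  - by move=> x; rewrite mem_filter => /andP [].
  - move=> x; rewrite mem_filter => /andP [] /= px _.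
    by move: px; rewrite /p; case: excluded_middle_informative.
have H1 : count p T <= size F + sumn (map a Q).
  rewrite -size_filter; apply: IH.
  - exact: filter_uniq.
  - move=> x; rewrite mem_filter => /andP [px xT] Hk; apply: HF => // k.
    rewrite in_cons => /orP [/eqP ->|]; last by apply: Hk.
    by move: px; rewrite /p; case: excluded_middle_informative.
  - move=> k kQ; apply: (@ac_sub _ _ _ _ T); last by apply: Ha; rewrite in_cons kQ orbT.
    by move=> x; rewrite mem_filter => /andP [].
rewrite /= E; lia.
Qed.

Lemma gen (U : countType) (X : nat -> U -> Prop) (a : nat -> nat) (P : seq nat) :
  forall Q, exists B, forall (D : seq nat) (T : seq U), {subset D <= P} -> uniq T ->
   (exists F : seq U, forall x, (forall k, k \in Q ++ D -> X k x) -> x \in F) ->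
   (forall k, k \in Q ++ D -> a_contained (a k) (X k) T) -> size T <= B.
Proof.
elim: P => [|p P IH] Q.
  case: (classic (exists F : seq U, forall x, (forall k, k \in Q -> X k x) -> x \in F)) => [[F HF]|nF].
    exists (size F + sumn (map a Q)) => D T sD uT _ Ha.
    apply: (@count_bound U X a F Q) => //.
      by move=> x _ H; apply HF.
    by move=> k kQ; apply: Ha; rewrite mem_cat kQ.
  exists 0 => D T sD uT [F HF] _; exfalso; apply nF; exists F => x Hx; apply HF => k.
  have D0 : k \in D = false by apply/negbTE/negP => /sD.
  by rewrite mem_cat D0 orbF; apply Hx.
have [B1 H1] := IH Q. have [B2 H2] := IH (p :: Q).
exists (maxn B1 B2) => D T sD uT HF Ha.
case pD: (p \in D).
  have memE : forall k, (k \in (p::Q) ++ filter (predC1 p) D) = (k \in Q ++ D).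
    move=> k; rewrite !mem_cat in_cons mem_filter /=.
    by case: (eqVneq k p) => [->|nkp] /=; rewrite ?pD ?orbT.
  apply: leq_trans (H2 (filter (predC1 p) D) T _ uT _ _) (leq_maxr _ _).
  - move=> k; rewrite mem_filter => /andP [/= kp kD]; move: (sD k kD).
    by rewrite in_cons (negbTE kp).
  - case: HF => F HF; exists F => x Hx; apply HF => k kQD; apply Hx; by rewrite memE.
  - by move=> k; rewrite memE; apply Ha.
apply: leq_trans (H1 D T _ uT HF Ha) (leq_maxl _ _).
move=> k kD; have := sD k kD; rewrite in_cons; case: eqP => [Ek|] //= .
by subst; rewrite kD in pD.
Qed.

Lemma part1 (U : countType) (L : nat -> U -> Prop) s j :
  exists B, forall T, stepA_valid L s j T -> size T <= B.
Proof.
have [B HB] := gen (fun k => L (ent s k).2) (fun k => (ent s k).1) (iota 0 j) [::].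
exists B => T [uT [D [_ [Dj [Ha HF]]]]].
apply: (HB D) => //.
by move=> k kD; rewrite mem_iota /= add0n; exact: Dj.
Qed.

Lemma maxP (P : nat -> Prop) B : (exists n, P n) -> (forall n, P n -> n <= B) ->
  exists n, P n /\ forall k, P k -> k <= n.
Proof.
move=> [n0 Pn0] HB.
suff H: forall d k, B - k = d -> (exists n, P n /\ k <= n) ->
   exists n, P n /\ forall m, P m -> m <= n.
  by apply: (H (B - 0) 0) => //; exists n0.
elim=> [|d IH] k Hd [n [Pn kn]].
  exists n; split => // m Pm. have := HB m Pm. have := HB n Pn. lia.
case: (classic (exists n, P n /\ k.+1 <= n)) => [H|nH].
  apply: (IH k.+1) => //; lia.
exists n; split => // m Pm. case: (leqP m k) => [mk|km]; first lia.
exfalso; apply nH; exists m; split => //.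
Qed.

Lemma outcome (U : countType) (L : nat -> U -> Prop) s j :
  exists mchk, stepA_outcome L s j mchk.
Proof.
have [B HB] := part1 L s j.
case: (classic (exists T, stepA_valid L s j T)) => [[T0 HT0]|nT].
  have [n [[T [HT Tn]] Hmax]] :=
    @maxP (fun n => exists T, stepA_valid L s j T /\ size T = n) B
      (ex_intro _ (size T0) (ex_intro _ T0 (conj HT0 erefl)))
      (fun n '(ex_intro T (conj H1 H2)) => eq_ind _ (fun k => k <= B) (HB T H1) _ H2).
  exists n; right; exists T; split => //; split => //; move=> T' HT'; rewrite Tn; apply Hmax.
  by exists T'.
exists 0; left; split => // T HT; apply nT; by exists T.
Qed.

Lemma swap_ent s k : k.+1 < size s -> ent (swap_at s k) k = ent s k.+1.
Proof.
move=> H; rewrite /swap_at /ent nth_cat size_take.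
have -> : k < size s by lia.
by rewrite ltnn subnn.
Qed.

Lemma swap_size s k : k.+1 < size s -> size (swap_at s k) = size s.
Proof. move=> H; rewrite /swap_at !size_cat size_take size_drop /=. case: ifP; lia. Qed.

Lemma run (U : countType) (L : nat -> U -> Prop) l e : forall j s m, reachA L l s j m -> 0 < j ->
  j <= size s -> ent s j.-1 = e ->
  exists s' m' v, reachDone L l s' m' /\ size s' = size s /\ m' e = Some v.
Proof.
elim=> [|j IH] s m HA Hj0 Hj He; first by [].
have [mchk Ho] := outcome L s j.+1.
case: (classic (stop_test s j.+1 m mchk)) => [Hs|nS].
  exists s, (upd m (ent s j.+1.-1) mchk), mchk; split; first exact: RD_stop HA Ho Hs.
  by split => //; rewrite -He /upd eqxx.
have j0 : 0 < j.
  destruct j; [exfalso; apply nS; left; done | done].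
have HA' := RA_swap HA Ho nS.
have Hsz : size (swap_at s j.-1) = size s by apply: swap_size; rewrite prednK //.
have [s' [m' [v [HD [Hs' Hm']]]]] := IH _ _ HA' j0 (ltac:(rewrite Hsz; lia))
   (ltac:(rewrite swap_ent prednK //; lia)).
by exists s', m', v; rewrite Hs' Hsz.
Qed.

Lemma round_step (U : countType) (L : nat -> U -> Prop) k s m :
  reachDone L k s m -> size s = k ->
  exists s' m' v, reachDone L k.+1 s' m' /\ size s' = k.+1 /\ m' (diag_pair k.+1) = Some v.
Proof.
move=> HD Hs. have HA := RA_start HD.
have [s' [m' [v [HD' [Hs' Hm]]]]] := @run U L k.+1 (diag_pair k.+1) _ _ _ HA (ltn0Sn _)
   (ltac:(by rewrite size_rcons Hs)) (ltac:(by rewrite /ent nth_rcons Hs ltnn eqxx)).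
by exists s', m', v; rewrite Hs' size_rcons Hs.
Qed.

Lemma all_rounds (U : countType) (L : nat -> U -> Prop) k :
  exists s m, reachDone L k s m /\ size s = k.
Proof.
elim: k => [|k [s [m [HD Hs]]]].
  by exists [::], (fun _ => None); split => //; constructor.
have [s' [m' [v [? [? _]]]]] := round_step HD Hs; by exists s', m'.
Qed.

Definition blk (n' : nat) : seq entry := [seq (n' - h, h.+1) | h <- iota 0 n'.+1].

Lemma diag_listD a b : diag_list (a + b) = diag_list a ++ flatten [seq blk n' | n' <- iota a b].
Proof. by rewrite /diag_list iotaD map_cat flatten_cat add0n. Qed.

Lemma size_ge N : N <= size (diag_list N).
Proof.
elim: N => // N IH.
rewrite -addn1 diag_listD size_cat /= cats0 size_map size_iota; lia.
Qed.

Lemma nth_cat_r (T : Type) (x0 : T) s1 s2 k : nth x0 (s1 ++ s2) (size s1 + k) = nth x0 s2 k.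
Proof. by rewrite nth_cat ltnNge leq_addr addKn. Qed.

Lemma flatten_cons (T : Type) (x : seq T) s : flatten (x :: s) = x ++ flatten s.
Proof. by []. Qed.

Lemma diag n i : 0 < i -> exists k, diag_pair k.+1 = (n, i).
Proof.
move=> i0. set h := i.-1. set n' := n + h.
have Sge := size_ge n'.
set S := size (diag_list n').
exists (S + h). rewrite /diag_pair /=.
have -> : (S + h).+1 = n' + (S + h - n').+1 by lia.
rewrite diag_listD.
have -> : iota n' (S + h - n').+1 = n' :: iota n'.+1 (S + h - n') by [].
rewrite nth_cat_r map_cons flatten_cons nth_cat size_map size_iota.
have -> : h < n'.+1 by lia.
rewrite (nth_map 0); last by rewrite size_iota; lia.
rewrite nth_iota; last by lia.
congr (_, _); lia.
Qed.

Theorem mainTheorem13 (U : countType) (L : nat -> U -> Prop)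
  (U_infinite : forall s : seq U, exists x, x \notin s)
  (L_infinite : forall i, 0 < i -> forall s : seq U, exists x, L i x /\ x \notin s) :
  (* at every execution of step (A), sizes of valid T are bounded *)
  (forall l s j m, reachA L l s j m ->
     exists B, forall T, stepA_valid L s j T -> size T <= B) /\
  (* m*_n(L_i) is (eventually) assigned a finite value *)
  (forall n i, 0 < i ->
     exists l s m v, reachDone L l s m /\ m (n, i) = Some v).
Proof.
split; first by move=> l s j m _; exact: part1.
move=> n i i0. have [k Hk] := diag n i0.
have [s [m [HD Hs]]] := all_rounds L k.
have [s' [m' [v [HD' [_ Hm]]]]] := round_step HD Hs.
by exists k.+1, s', m', v; split => //; rewrite -Hk.
Qed.
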